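(* Let $v = \pi \sqrt{3n/2}$, $v^+ = \pi \sqrt{3(n+1)/2}$, $v^- = \pi \sqrt{3(n-1)/2}$. For all integers $n \geq 2363$, $$\frac{v}{\sqrt{v^+ v^-}}\, \Xi(n) \leq \frac{I_2(v^-)\, I_2(v^+)}{I_2(v)^2} \leq \frac{v}{\sqrt{v^+ v^-}}\, \Psi(n),$$ where $$\Xi(n) = \left(1- \frac{9\pi^4}{16 v^3}- \frac{27 \pi^6}{8 v^5} - \frac{405 \pi^8}{2048 v^7}\right) \left( 1-\frac{309}{v^5}-\frac{535}{v^6}\right),$$ $$\Psi(n) = \left(1-\frac{9\pi^4}{16 v^3}+\frac{81 \pi^8}{256 v^6}\right) \left( 1-\frac{308}{v^5}-\frac{286}{v^6} \right).$$
   Context: $I_2$ denotes the modified Bessel function of the first kind of order 2. *)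

(* Defs.v *)
From Stdlib Require Import Reals Factorial.
From Coquelicot Require Import Coquelicot.
Open Scope R_scope.

Definition besselI2 (x : R) : R :=
  Series (fun k : nat => (x / 2) ^ (2 * k + 2) / (INR (fact k) * INR (fact (k + 2)))).

Definition bv (n : nat) : R := PI * sqrt (3 * INR n / 2).
Definition bvp (n : nat) : R := PI * sqrt (3 * (INR n + 1) / 2).
Definition bvm (n : nat) : R := PI * sqrt (3 * (INR n - 1) / 2).

Definition Xi (n : nat) : R :=
  let v := bv n in
  (1 - 9 * PI ^ 4 / (16 * v ^ 3) - 27 * PI ^ 6 / (8 * v ^ 5)
     - 405 * PI ^ 8 / (2048 * v ^ 7))
  * (1 - 309 / v ^ 5 - 535 / v ^ 6).

Definition Psi (n : nat) : R :=
  let v := bv n in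
  (1 - 9 * PI ^ 4 / (16 * v ^ 3) + 81 * PI ^ 8 / (256 * v ^ 6))
  * (1 - 308 / v ^ 5 - 286 / v ^ 6).

(* Main.v *)
Require Import Defs.
From Stdlib Require Import Reals Lra Lia Factorial Machin.
From Coquelicot Require Import Coquelicot.
Open Scope R_scope.

Definition ca (n : nat) : R := / (INR (fact n) * INR (fact (n + 2))).

Lemma ca_pos n : 0 < ca n.
Proof.
  unfold ca. apply Rinv_0_lt_compat, Rmult_lt_0_compat; apply lt_0_INR, lt_O_fact.
Qed.

Lemma ca_S n : ca n = (INR n + 1) * (INR n + 3) * ca (S n).
Proof.
  unfold ca. replace (S n + 2)%nat with (S (n+2)) by lia.
  rewrite !fact_simpl, !mult_INR.
  replace (INR (S (n+2))) with (INR n + 3) by (rewrite S_INR, plus_INR; simpl; lra).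
  rewrite S_INR.
  assert (0 < INR (fact n)) by apply (lt_0_INR _ (lt_O_fact n)).
  assert (0 < INR (fact (n+2))) by apply (lt_0_INR _ (lt_O_fact _)).
  assert (0 <= INR n) by apply pos_INR.
  field. lra.
Qed.

Lemma ca_radius : CV_radius ca = p_infty.
Proof.
  apply CV_radius_infinite_DAlembert.
  - intro n; apply Rgt_not_eq, ca_pos.
  - apply is_lim_seq_le_le with (u := fun _ => 0) (w := fun n => / (INR n + 1)).
    + intro n. assert (0 <= INR n) by apply pos_INR.
      pose proof (ca_pos n). pose proof (ca_pos (S n)).
      rewrite (ca_S n). rewrite Rabs_pos_eq.
      2:{ apply Rlt_le. apply Rdiv_lt_0_compat; try lra. nra. }
      split.
      * apply Rlt_le. apply Rdiv_lt_0_compat; nra.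
      * replace (ca (S n) / ((INR n + 1) * (INR n + 3) * ca (S n)))
          with (/ ((INR n + 1) * (INR n + 3))) by (field; lra).
        apply Rinv_le_contravar; nra.
    + apply is_lim_seq_const.
    + replace (Finite 0) with (Rbar_inv p_infty) by reflexivity.
      apply is_lim_seq_inv. 2: discriminate.
      eapply is_lim_seq_ext with (u := fun n => INR (S n)).
      { intro; rewrite S_INR; reflexivity. }
      apply (is_lim_seq_incr_1 INR p_infty), is_lim_seq_INR.
Qed.

Definition S0 (t : R) := PSeries ca t.
Definition S1 (t : R) := PSeries (PS_derive ca) t.
Definition S2 (t : R) := PSeries (PS_derive (PS_derive ca)) t.

Lemma rad_ok (b : nat -> R) t : CV_radius b = p_infty -> Rbar_lt (Rabs t) (CV_radius b).
Proof. intro H; rewrite H; exact I. Qed.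

Lemma rad1 : CV_radius (PS_derive ca) = p_infty.
Proof. rewrite CV_radius_derive; apply ca_radius. Qed.
Lemma rad2 : CV_radius (PS_derive (PS_derive ca)) = p_infty.
Proof. rewrite CV_radius_derive; apply rad1. Qed.

Lemma dS0 t : is_derive S0 t (S1 t).
Proof. apply is_derive_PSeries, rad_ok, ca_radius. Qed.
Lemma dS1 t : is_derive S1 t (S2 t).
Proof. apply is_derive_PSeries, rad_ok, rad1. Qed.

Lemma S_ode t : t * S2 t + 3 * S1 t = S0 t.
Proof.
  unfold S0, S1, S2.
  rewrite <- PSeries_incr_1, <- PSeries_scal, <- PSeries_plus.
  2:{ apply ex_pseries_incr_1, CV_radius_inside, rad_ok, rad2. }
  2:{ apply ex_pseries_scal. apply Rmult_comm. apply CV_radius_inside, rad_ok, rad1. }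
  apply PSeries_ext. intro n.
  unfold PS_plus, PS_scal, PS_incr_1, PS_derive. simpl.
  destruct n as [|m].
  - unfold plus, scal, zero; simpl; unfold mult; simpl. unfold ca; simpl. field.
  - unfold plus, scal; simpl; unfold mult; simpl.
    assert (E: match m with 0%nat => 1 | S _ => INR m + 1 end = INR (S m)) by (destruct m; reflexivity).
    rewrite E. rewrite (ca_S (S m)). rewrite !S_INR. ring.
Qed.

Definition qq (x : R) := x ^ 2 / 4.
Definition Y (x : R) := qq x * S0 (qq x).
Definition Yp (x : R) := x / 2 * (S0 (qq x) + qq x * S1 (qq x)).
Definition Ypp (x : R) := / 2 * (S0 (qq x) + qq x * S1 (qq x)) + qq x * (S0 (qq x) - S1 (qq x)).

Lemma pow_half x n : (x / 2) ^ (2 * n + 2) = x ^ 2 / 4 * (x ^ 2 / 4) ^ n.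
Proof.
  replace (2 * n + 2)%nat with (2 * (n + 1))%nat by lia.
  rewrite pow_mult, pow_add. replace ((x/2)^2) with (x^2/4) by field. ring.
Qed.

Lemma bessel_Y x : besselI2 x = Y x.
Proof.
  unfold besselI2, Y, S0, PSeries, qq.
  rewrite <- Series_scal_l. apply Series_ext. intro n.
  rewrite pow_half.
  change (scal ((x ^ 2 / 4) ^ n) (ca n)) with (((x ^ 2 / 4) ^ n) * (ca n)).
  unfold ca, Rdiv. ring.
Qed.

Lemma dY x : is_derive Y x (Yp x).
Proof.
  unfold Y, Yp.
  assert (H0 := dS0 (qq x)).
  assert (Hq : is_derive qq x (x/2)) by (unfold qq; auto_derive; [exact I| field]).
  apply is_derive_ext with (f := fun x => qq x * S0 (qq x)). { reflexivity. }
  replace (x / 2 * (S0 (qq x) + qq x * S1 (qq x))) with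
    (x/2 * S0 (qq x) + qq x * (x/2 * S1 (qq x))) by ring.
  apply (is_derive_mult qq (fun x => S0 (qq x))).
  - exact Hq.
  - apply (is_derive_comp S0 qq x). apply dS0. exact Hq.
  - intros; apply Rmult_comm.
Qed.

Lemma dqq x : is_derive qq x (x/2).
Proof. unfold qq; auto_derive; [exact I| field]. Qed.

Lemma dS0q x : is_derive (fun x => S0 (qq x)) x (x/2 * S1 (qq x)).
Proof. apply (is_derive_comp S0 qq x). apply dS0. apply dqq. Qed.
Lemma dS1q x : is_derive (fun x => S1 (qq x)) x (x/2 * S2 (qq x)).
Proof. apply (is_derive_comp S1 qq x). apply dS1. apply dqq. Qed.

Lemma is_derive_eq (f : R -> R) x d1 d2 : is_derive f x d1 -> d1 = d2 -> is_derive f x d2.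
Proof. intros H ->; exact H. Qed.

Lemma dYp x : is_derive Yp x (Ypp x).
Proof.
  unfold Yp.
  eapply is_derive_eq.
  - apply (is_derive_mult (fun x => x/2) (fun x => S0 (qq x) + qq x * S1 (qq x))).
    + auto_derive; [exact I|reflexivity].
    + apply (is_derive_plus (fun x => S0 (qq x)) (fun x => qq x * S1 (qq x))).
      * apply dS0q.
      * apply (is_derive_mult qq (fun x => S1 (qq x))).
        -- apply dqq.
        -- apply dS1q.
        -- intros; apply Rmult_comm.
    + intros; apply Rmult_comm.
  - unfold Ypp. unfold plus, mult; simpl.
    pose proof (S_ode (qq x)) as E.
    replace (S0 (qq x) - S1 (qq x)) with (2 * S1 (qq x) + qq x * S2 (qq x)) by lra.
    unfold qq; field.
Qed.

Lemma Y_ode x : x <> 0 -> Ypp x = (1 + 4 / x ^ 2) * Y x - Yp x / x.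
Proof.
  intro Hx. unfold Ypp, Y, Yp, qq. field. exact Hx.
Qed.

Lemma Series_zero : Series (fun _ : nat => 0) = 0.
Proof.
  rewrite (Series_ext (fun _ => 0) (fun n => 0 * 0)) by (intro; ring).
  rewrite Series_scal_l. ring.
Qed.

Lemma ex_S0 t : ex_series (fun n => ca n * t ^ n).
Proof. apply ex_pseries_R, CV_radius_inside, rad_ok, ca_radius. Qed.

Lemma PS_derive_ca n : PS_derive ca n = ca n / (INR n + 3).
Proof.
  unfold PS_derive. rewrite (ca_S n). rewrite S_INR.
  assert (0 <= INR n) by apply pos_INR. field. lra.
Qed.

Lemma S1_bounds t : 0 <= t -> 0 <= S1 t <= S0 t / 3.
Proof.
  intro Ht. unfold S1, S0, PSeries.
  split.
  - rewrite <- Series_zero.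
    apply Series_le. 2:{ apply ex_pseries_R, CV_radius_inside, rad_ok, rad1. }
    intro n; split; [lra|].
    rewrite PS_derive_ca. pose proof (ca_pos n). assert (0 <= INR n) by apply pos_INR.
    apply Rmult_le_pos. apply Rlt_le, Rdiv_lt_0_compat; lra. apply pow_le; lra.
  - unfold Rdiv. rewrite Rmult_comm, <- Series_scal_l.
    apply Series_le. 2:{ exact (ex_series_scal_l (/3) _ (ex_S0 t)). }
    intro n.
    rewrite PS_derive_ca. pose proof (ca_pos n). assert (0 <= INR n) by apply pos_INR.
    assert (0 <= t ^ n) by (apply pow_le; lra).
    split.
    + apply Rmult_le_pos. apply Rlt_le, Rdiv_lt_0_compat; lra. lra.
    + replace (/ 3 * (ca n * t ^ n)) with ((ca n * / 3) * t ^ n) by ring.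
      apply Rmult_le_compat_r; [lra|]. unfold Rdiv. apply Rmult_le_compat_l; [lra|].
      apply Rinv_le_contravar; lra.
Qed.

Lemma S0_pos t : 0 <= t -> 0 < S0 t.
Proof.
  intro Ht. unfold S0, PSeries.
  rewrite Series_incr_1 by apply ex_S0.
  assert (0 <= Series (fun k : nat => ca (S k) * t ^ S k)).
  { rewrite <- Series_zero.
    apply Series_le.
    - intro n; split; [lra|].
      apply Rmult_le_pos. apply Rlt_le, ca_pos. apply pow_le; lra.
    - apply (ex_series_incr_1 (fun n => ca n * t ^ n)), ex_S0. }
  rewrite pow_O. pose proof (ca_pos 0). lra.
Qed.

Lemma qq_pos x : 0 < x -> 0 < qq x.
Proof. intro; unfold qq; nra. Qed.

Lemma Y_pos x : 0 < x -> 0 < Y x.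
Proof.
  intro Hx. unfold Y. pose proof (qq_pos x Hx). pose proof (S0_pos (qq x) (Rlt_le _ _ H)). nra.
Qed.

Lemma Yp_nonneg x : 0 < x -> 0 <= Yp x.
Proof.
  intro Hx. unfold Yp. pose proof (qq_pos x Hx).
  pose proof (S0_pos (qq x) (Rlt_le _ _ H)). pose proof (S1_bounds (qq x) (Rlt_le _ _ H)).
  apply Rmult_le_pos. lra. nra.
Qed.

Lemma Yp_upper x : 0 < x -> Yp x <= (2 / x + x / 6) * Y x.
Proof.
  intro Hx. unfold Yp, Y. pose proof (qq_pos x Hx).
  pose proof (S0_pos (qq x) (Rlt_le _ _ H)). pose proof (S1_bounds (qq x) (Rlt_le _ _ H)).
  replace ((2 / x + x / 6) * (qq x * S0 (qq x))) with (x / 2 * (S0 (qq x) + qq x * (S0 (qq x) / 3))).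
  2:{ unfold qq. field. lra. }
  apply Rmult_le_compat_l. lra. nra.
Qed.

Lemma mono_le (f df : R -> R) a b : a <= b ->
  (forall c, a <= c <= b -> is_derive f c (df c)) ->
  (forall c, a <= c <= b -> 0 <= df c) -> f a <= f b.
Proof.
  intros Hab Hd Hp. destruct (Req_dec a b) as [->|Hne]; [lra|].
  destruct (MVT_cor2 f df a b) as [c [Hc1 Hc2]]; [lra| |].
  - intros c Hc. apply is_derive_Reals. apply Hd; lra.
  - assert (0 <= df c) by (apply Hp; lra). nra.
Qed.

Definition Res (U dU : R -> R) (x : R) := dU x + U x / x + U x ^ 2 - 1 - 4 / x ^ 2.

Lemma cmp_up (U dU P : R -> R) x0 : 0 < x0 ->
  (forall x, x0 <= x -> is_derive U x (dU x)) ->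
  (forall x, x0 <= x -> is_derive P x (U x)) ->
  (forall x, x0 <= x -> 0 <= Res U dU x) ->
  Yp x0 <= U x0 * Y x0 ->
  forall x, x0 <= x -> Yp x <= U x * Y x.
Proof.
  intros Hx0 HU HP HR H0 x Hx.
  set (H := fun t => t * exp (P t) * (U t * Y t - Yp t)).
  assert (Hm : H x0 <= H x).
  { apply (mono_le H (fun t => t * exp (P t) * Y t * Res U dU t)); [lra| |].
    - intros c Hc. unfold H.
      eapply is_derive_eq.
      + apply (is_derive_mult (fun t => t * exp (P t)) (fun t => U t * Y t - Yp t)).
        * apply (is_derive_mult (fun t => t) (fun t => exp (P t))).
          -- apply (is_derive_id (K := R_AbsRing)).
          -- apply (is_derive_comp exp P). apply is_derive_exp. apply HP; lra.
          -- intros; apply Rmult_comm.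
        * apply (is_derive_minus (fun t => U t * Y t) Yp).
          -- apply (is_derive_mult U Y). apply HU; lra. apply dY. intros; apply Rmult_comm.
          -- apply dYp.
        * intros; apply Rmult_comm.
      + unfold plus, mult, minus, scal, opp, one; simpl. unfold mult, plus, opp; simpl.
        rewrite Y_ode by lra. unfold Res. field. lra.
    - intros c Hc. pose proof (Y_pos c ltac:(lra)). pose proof (exp_pos (P c)).
      pose proof (HR c ltac:(lra)).
      apply Rmult_le_pos; [|lra]. apply Rmult_le_pos; [|lra]. apply Rmult_le_pos; lra. }
  unfold H in Hm.
  pose proof (exp_pos (P x0)). pose proof (exp_pos (P x)).
  assert (0 <= x0 * exp (P x0) * (U x0 * Y x0 - Yp x0)).
  { apply Rmult_le_pos; [|lra]. apply Rmult_le_pos; lra. }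
  assert (0 < x * exp (P x)) by (apply Rmult_lt_0_compat; lra).
  assert (0 <= U x * Y x - Yp x).
  { destruct (Rle_dec 0 (U x * Y x - Yp x)); [assumption|]. nra. }
  lra.
Qed.

Lemma cmp_low (L dL P : R -> R) x0 : 0 < x0 ->
  (forall x, x0 <= x -> is_derive L x (dL x)) ->
  (forall x, x0 <= x -> is_derive P x (L x)) ->
  (forall x, x0 <= x -> Res L dL x <= 0) ->
  L x0 * Y x0 <= Yp x0 ->
  forall x, x0 <= x -> L x * Y x <= Yp x.
Proof.
  intros Hx0 HU HP HR H0 x Hx.
  set (H := fun t => t * exp (P t) * (Yp t - L t * Y t)).
  assert (Hm : H x0 <= H x).
  { apply (mono_le H (fun t => - (t * exp (P t) * Y t * Res L dL t))); [lra| |].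
    - intros c Hc. unfold H.
      eapply is_derive_eq.
      + apply (is_derive_mult (fun t => t * exp (P t)) (fun t => Yp t - L t * Y t)).
        * apply (is_derive_mult (fun t => t) (fun t => exp (P t))).
          -- apply (is_derive_id (K := R_AbsRing)).
          -- apply (is_derive_comp exp P). apply is_derive_exp. apply HP; lra.
          -- intros; apply Rmult_comm.
        * apply (is_derive_minus Yp (fun t => L t * Y t)).
          -- apply dYp.
          -- apply (is_derive_mult L Y). apply HU; lra. apply dY. intros; apply Rmult_comm.
        * intros; apply Rmult_comm.
      + unfold plus, mult, minus, scal, opp, one; simpl. unfold mult, plus, opp; simpl.
        rewrite Y_ode by lra. unfold Res. field. lra.
    - intros c Hc. pose proof (Y_pos c ltac:(lra)). pose proof (exp_pos (P c)).
      pose proof (HR c ltac:(lra)).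
      assert (0 <= c * exp (P c) * Y c).
      { apply Rmult_le_pos; [|lra]. apply Rmult_le_pos; lra. }
      nra. }
  unfold H in Hm.
  pose proof (exp_pos (P x0)). pose proof (exp_pos (P x)).
  assert (0 <= x0 * exp (P x0) * (Yp x0 - L x0 * Y x0)).
  { apply Rmult_le_pos; [|lra]. apply Rmult_le_pos; lra. }
  assert (0 < x * exp (P x)) by (apply Rmult_lt_0_compat; lra).
  assert (0 <= Yp x - L x * Y x).
  { destruct (Rle_dec 0 (Yp x - L x * Y x)); [assumption|]. nra. }
  lra.
Qed.

Lemma ratio_up (U P : R -> R) x0 a b : 0 < x0 -> x0 <= a <= b ->
  (forall x, x0 <= x -> is_derive P x (U x)) ->
  (forall x, x0 <= x -> Yp x <= U x * Y x) ->
  Y b * exp (- P b) <= Y a * exp (- P a).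
Proof.
  intros Hx0 Hab HP HY.
  cut (- (Y a * exp (- P a)) <= - (Y b * exp (- P b))); [lra|].
  apply (mono_le (fun t => - (Y t * exp (- P t))) (fun t => (U t * Y t - Yp t) * exp (- P t))); [lra| |].
  - intros c Hc. eapply is_derive_eq.
    + apply (is_derive_opp (fun t => Y t * exp (- P t))).
      apply (is_derive_mult Y (fun t => exp (- P t))).
      * apply dY.
      * apply (is_derive_comp exp (fun t => - P t)). apply is_derive_exp.
        apply (is_derive_opp P). apply HP; lra.
      * intros; apply Rmult_comm.
    + unfold plus, mult, scal, opp; simpl. unfold mult, plus, opp; simpl. ring.
  - intros c Hc. pose proof (HY c ltac:(lra)). pose proof (exp_pos (- P c)).
    apply Rmult_le_pos; lra.
Qed.

Lemma ratio_low (L P : R -> R) x0 a b : 0 < x0 -> x0 <= a <= b ->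
  (forall x, x0 <= x -> is_derive P x (L x)) ->
  (forall x, x0 <= x -> L x * Y x <= Yp x) ->
  Y a * exp (- P a) <= Y b * exp (- P b).
Proof.
  intros Hx0 Hab HP HY.
  apply (mono_le (fun t => (Y t * exp (- P t))) (fun t => (Yp t - L t * Y t) * exp (- P t))); [lra| |].
  - intros c Hc. eapply is_derive_eq.
    + apply (is_derive_mult Y (fun t => exp (- P t))).
      * apply dY.
      * apply (is_derive_comp exp (fun t => - P t)). apply is_derive_exp.
        apply (is_derive_opp P). apply HP; lra.
      * intros; apply Rmult_comm.
    + unfold plus, mult, scal, opp; simpl. unfold mult, plus, opp; simpl. ring.
  - intros c Hc. pose proof (HY c ltac:(lra)). pose proof (exp_pos (- P c)).
    apply Rmult_le_pos; lra.
Qed.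

Definition x0 : R := 20.
Definition U0 (x : R) := 1 - 1 / (2 * x) + 15 / (8 * x ^ 2) + 15 / (8 * x ^ 3) + 135 / (128 * x ^ 4).
Definition dU0 (x : R) := 1 / (2 * x ^ 2) - 15 / (4 * x ^ 3) - 45 / (8 * x ^ 4) - 135 / (32 * x ^ 5).
Definition Ut (x : R) := U0 x + 4 * exp (- (x - x0)).
Definition dUt (x : R) := dU0 x - 4 * exp (- (x - x0)).
Definition Lt (x : R) := U0 x - 2 / x ^ 5 - exp (- (x - x0)).
Definition dLt (x : R) := dU0 x + 10 / x ^ 6 + exp (- (x - x0)).
Definition Q0 (x : R) := - 15 / (8 * x) - 15 / (16 * x ^ 2) - 45 / (128 * x ^ 3).
Definition PU (x : R) := x - ln x / 2 + Q0 x - 4 * exp (- (x - x0)).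
Definition PL (x : R) := x - ln x / 2 + Q0 x + 1 / (2 * x ^ 4) + exp (- (x - x0)).

Ltac nzs := repeat split; try exact I;
  try (apply Rgt_not_eq, Rlt_gt; repeat apply Rmult_lt_0_compat; lra);
  try lra.

Lemma dUt_ok x : 0 < x -> is_derive Ut x (dUt x).
Proof. intro H. unfold Ut, dUt, U0, dU0. auto_derive. nzs. unfold Rminus. field. lra. Qed.
Lemma dLt_ok x : 0 < x -> is_derive Lt x (dLt x).
Proof. intro H. unfold Lt, dLt, U0, dU0. auto_derive. nzs. unfold Rminus. field. lra. Qed.
Lemma dPU_ok x : 0 < x -> is_derive PU x (Ut x).
Proof. intro H. unfold PU, Ut, U0, Q0. auto_derive. nzs. unfold Rminus. field. lra. Qed.
Lemma dPL_ok x : 0 < x -> is_derive PL x (Lt x).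
Proof. intro H. unfold PL, Lt, U0, Q0. auto_derive. nzs. unfold Rminus. field. lra. Qed.

Lemma exp_le_mono a b : a <= b -> exp a <= exp b.
Proof. intro H. destruct (Req_dec a b) as [->|]; [lra|]. apply Rlt_le, exp_increasing; lra. Qed.

Lemma e_bounds x : x0 <= x -> 0 < exp (- (x - x0)) <= 1.
Proof.
  intro H. split. apply exp_pos. rewrite <- exp_0. apply exp_le_mono. lra.
Qed.

Lemma U0_w x : 0 < x -> U0 x = 1 - /x/2 + 15/8 * (/x)^2 + 15/8 * (/x)^3 + 135/128 * (/x)^4.
Proof. intro; unfold U0; field; lra. Qed.

Lemma Res_Ut x : x0 <= x -> 0 <= Res Ut dUt x.
Proof.
  intro Hx. pose proof (e_bounds x Hx) as [He1 He2].
  assert (Hx0: 0 < x) by (unfold x0 in Hx; lra).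
  set (e := exp (- (x - x0))) in *.
  set (w := / x).
  assert (Hw : 0 < w) by (apply Rinv_0_lt_compat; lra).
  assert (Hw2 : w <= /20) by (apply Rinv_le_contravar; unfold x0 in Hx; lra).
  assert (E : Res Ut dUt x = w^5 * (45/16 + 3825/512 * w + 2025/512 * w^2 + 18225/16384 * w^3)
     + 4 * e * (-1 + w + 2 * (1 - w/2 + 15/8 * w^2 + 15/8 * w^3 + 135/128 * w^4) + 4 * e)).
  { unfold Res, Ut, dUt, U0, dU0. fold e. unfold w. field. lra. }
  rewrite E.
  assert (0 <= w^2) by nra. assert (0 <= w^3) by (apply pow_le; lra).
  assert (0 <= w^4) by (apply pow_le; lra). assert (0 <= w^5) by (apply pow_le; lra).
  apply Rplus_le_le_0_compat.
  - apply Rmult_le_pos; [lra|]. nra.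
  - apply Rmult_le_pos; [lra|]. nra.
Qed.

Lemma Res_Lt x : x0 <= x -> Res Lt dLt x <= 0.
Proof.
  intro Hx. pose proof (e_bounds x Hx) as [He1 He2].
  assert (Hx0: 0 < x) by (unfold x0 in Hx; lra).
  set (e := exp (- (x - x0))) in *.
  set (w := / x).
  assert (Hw : 0 < w) by (apply Rinv_0_lt_compat; lra).
  assert (Hw2 : w <= /20) by (apply Rinv_le_contravar; unfold x0 in Hx; lra).
  assert (E : Res Lt dLt x = w^5 * (-19/16 + 8945/512 * w - 1815/512 * w^2 - 104655/16384 * w^3
       - 135/32 * w^4 + 4 * w^5)
     + e * (1 - w - 2 * (1 - w/2 + 15/8 * w^2 + 15/8 * w^3 + 135/128 * w^4 - 2 * w^5) + e)).
  { unfold Res, Lt, dLt, U0, dU0. fold e. unfold w. field. lra. }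
  rewrite E.
  assert (0 <= w^2) by nra. assert (0 <= w^3) by (apply pow_le; lra).
  assert (0 <= w^4) by (apply pow_le; lra). assert (0 < w^5) by (apply pow_lt; lra).
  assert (w^2 <= w * /20) by nra. assert (w^3 <= w^2 * /20) by nra.
  assert (w^4 <= w^3 * /20) by nra. assert (w^5 <= w^4 * /20) by nra.
  assert (-19/16 + 8945/512 * w - 1815/512 * w^2 - 104655/16384 * w^3
       - 135/32 * w^4 + 4 * w^5 <= 0) by nra.
  assert (1 - w - 2 * (1 - w/2 + 15/8 * w^2 + 15/8 * w^3 + 135/128 * w^4 - 2 * w^5) + e <= 0) by nra.
  nra.
Qed.

Lemma Yup x : x0 <= x -> Yp x <= Ut x * Y x.
Proof.
  apply (cmp_up Ut dUt PU x0).
  - unfold x0; lra.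
  - intros; apply dUt_ok; unfold x0 in *; lra.
  - intros; apply dPU_ok; unfold x0 in *; lra.
  - apply Res_Ut.
  - assert (H20 : 0 < x0) by (unfold x0; lra).
    pose proof (Yp_upper x0 H20). pose proof (Y_pos x0 H20).
    eapply Rle_trans; [exact H|]. apply Rmult_le_compat_r; [lra|].
    unfold Ut, U0. replace (- (x0 - x0)) with 0 by ring. rewrite exp_0. unfold x0. lra.
Qed.

Lemma Ylow x : x0 <= x -> Lt x * Y x <= Yp x.
Proof.
  apply (cmp_low Lt dLt PL x0).
  - unfold x0; lra.
  - intros; apply dLt_ok; unfold x0 in *; lra.
  - intros; apply dPL_ok; unfold x0 in *; lra.
  - apply Res_Lt.
  - assert (H20 : 0 < x0) by (unfold x0; lra).
    pose proof (Yp_nonneg x0 H20). pose proof (Y_pos x0 H20).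
    assert (Lt x0 <= 0).
    { unfold Lt, U0. replace (- (x0 - x0)) with 0 by ring. rewrite exp_0. unfold x0. lra. }
    nra.
Qed.

Lemma Yratio_up a b : x0 <= a <= b -> Y b <= Y a * exp (PU b - PU a).
Proof.
  intro H. pose proof (ratio_up Ut PU x0 a b ltac:(unfold x0; lra) H
    (fun x Hx => dPU_ok x ltac:(unfold x0 in *; lra)) Yup).
  replace (exp (PU b - PU a)) with (exp (- PU a) / exp (- PU b)).
  2:{ unfold Rdiv. rewrite <- exp_Ropp, <- exp_plus. f_equal. ring. }
  pose proof (exp_pos (- PU b)).
  unfold Rdiv. apply (Rmult_le_reg_r (exp (- PU b))); [lra|].
  rewrite Rmult_assoc, Rmult_assoc, Rinv_l by lra. lra.
Qed.

Lemma Yratio_low a b : x0 <= a <= b -> Y a * exp (PL b - PL a) <= Y b.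
Proof.
  intro H. pose proof (ratio_low Lt PL x0 a b ltac:(unfold x0; lra) H
    (fun x Hx => dPL_ok x ltac:(unfold x0 in *; lra)) Ylow).
  replace (exp (PL b - PL a)) with (exp (- PL a) / exp (- PL b)).
  2:{ unfold Rdiv. rewrite <- exp_Ropp, <- exp_plus. f_equal. ring. }
  pose proof (exp_pos (- PL b)).
  unfold Rdiv. apply (Rmult_le_reg_r (exp (- PL b))); [lra|].
  rewrite Rmult_assoc, Rmult_assoc, Rinv_l by lra. lra.
Qed.

Lemma sq_le s q : 0 <= s -> 0 <= q -> s ^ 2 <= q ^ 2 -> s <= q.
Proof. intros. nra. Qed.

Section SQ.
Variables u sp sm : R.
Hypothesis Hu : 0 < u <= / 1000.
Hypothesis Hsp : 0 < sp.
Hypothesis Hsm : 0 < sm.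
Hypothesis Esp : sp ^ 2 = 1 + u.
Hypothesis Esm : sm ^ 2 = 1 - u.

Lemma pu k : 0 <= u ^ k.
Proof. apply pow_le; lra. Qed.

Lemma sp_up : sp <= 1 + u/2 - u^2/8 + u^3/16.
Proof.
  apply sq_le; [lra| nra |].
  rewrite Esp. pose proof (pu 4). pose proof (pu 5). pose proof (pu 6).
  assert (E: (1 + u/2 - u^2/8 + u^3/16)^2 - (1 + u) = u^4 * (5/64 - u/64 + u^2/256)) by field.
  assert (0 <= u^4 * (5/64 - u/64 + u^2/256)). { apply Rmult_le_pos; nra. }
  lra.
Qed.

Lemma sm_up : sm <= 1 - u/2 - u^2/8 - u^3/16.
Proof.
  apply sq_le; [lra| nra |].
  rewrite Esm.
  assert (E: (1 - u/2 - u^2/8 - u^3/16)^2 - (1 - u) = u^4 * (5/64 + u/64 + u^2/256)) by field.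
  assert (0 <= u^4 * (5/64 + u/64 + u^2/256)). { apply Rmult_le_pos. apply pu. nra. }
  lra.
Qed.

Lemma sp_lo : 1 + u/2 - u^2/8 <= sp.
Proof.
  apply sq_le; [nra| lra |].
  rewrite Esp.
  assert (E: (1 + u) - (1 + u/2 - u^2/8)^2 = u^3 * (1/8 - u/64)) by field.
  assert (0 <= u^3 * (1/8 - u/64)). { apply Rmult_le_pos. apply pu. nra. }
  lra.
Qed.

Lemma sm_lo : 1 - u/2 - u^2/8 - u^3/8 <= sm.
Proof.
  apply sq_le; [nra| lra |].
  rewrite Esm.
  assert (E: (1 - u) - (1 - u/2 - u^2/8 - u^3/8)^2 = u^3 * (1/8 - 9/64*u - u^2/32 - u^3/64)) by field.
  assert (0 <= u^3 * (1/8 - 9/64*u - u^2/32 - u^3/64)). { apply Rmult_le_pos. apply pu. nra. }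
  lra.
Qed.

Lemma rp_lo : 1 - u/2 + 3*u^2/8 - 5*u^3/16 <= / sp.
Proof.
  assert (Er : (/ sp) ^ 2 * (1 + u) = 1). { rewrite <- Esp. field. lra. }
  assert (0 < / sp) by (apply Rinv_0_lt_compat; lra).
  apply sq_le; [nra| lra |].
  assert (E: 1 - (1 + u) * (1 - u/2 + 3*u^2/8 - 5*u^3/16)^2
     = u^4 * (35/64 - 7/32*u + 35/256*u^2 - 25/256*u^3)) by field.
  assert (0 <= u^4 * (35/64 - 7/32*u + 35/256*u^2 - 25/256*u^3)).
  { apply Rmult_le_pos. apply pu. nra. }
  nra.
Qed.

Lemma rm_lo : 1 + u/2 + 3*u^2/8 + 5*u^3/16 <= / sm.
Proof.
  assert (Er : (/ sm) ^ 2 * (1 - u) = 1). { rewrite <- Esm. field. lra. }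
  assert (0 < / sm) by (apply Rinv_0_lt_compat; lra).
  apply sq_le; [nra| lra |].
  assert (E: 1 - (1 - u) * (1 + u/2 + 3*u^2/8 + 5*u^3/16)^2
     = u^4 * (35/64 + 7/32*u + 35/256*u^2 + 25/256*u^3)) by field.
  assert (0 <= u^4 * (35/64 + 7/32*u + 35/256*u^2 + 25/256*u^3)).
  { apply Rmult_le_pos. apply pu. nra. }
  nra.
Qed.

Lemma rp_up : / sp <= 1 - u/2 + 3*u^2/8.
Proof.
  assert (Er : (/ sp) ^ 2 * (1 + u) = 1). { rewrite <- Esp. field. lra. }
  assert (0 < / sp) by (apply Rinv_0_lt_compat; lra).
  apply sq_le; [lra| nra |].
  assert (E: (1 + u) * (1 - u/2 + 3*u^2/8)^2 - 1 = u^3 * (5/8 - 15/64*u + 9/64*u^2)) by field.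
  assert (0 <= u^3 * (5/8 - 15/64*u + 9/64*u^2)). { apply Rmult_le_pos. apply pu. nra. }
  nra.
Qed.

Lemma rm_up : / sm <= 1 + u/2 + 3*u^2/8 + u^3/2.
Proof.
  assert (Er : (/ sm) ^ 2 * (1 - u) = 1). { rewrite <- Esm. field. lra. }
  assert (0 < / sm) by (apply Rinv_0_lt_compat; lra).
  apply sq_le; [lra| nra |].
  assert (E: (1 - u) * (1 + u/2 + 3*u^2/8 + u^3/2)^2 - 1
     = u^3 * (3/8 - 47/64*u - 17/64*u^2 - 1/8*u^3 - 1/4*u^4)) by field.
  assert (0 <= u^3 * (3/8 - 47/64*u - 17/64*u^2 - 1/8*u^3 - 1/4*u^4)).
  { apply Rmult_le_pos. apply pu. nra. }
  nra.
Qed.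

Lemma sum_s_up : sp + sm <= 2 - u^2/4.
Proof. pose proof sp_up; pose proof sm_up; lra. Qed.
Lemma sum_s_lo : 2 - u^2/4 - u^3/8 <= sp + sm.
Proof. pose proof sp_lo; pose proof sm_lo; lra. Qed.
Lemma sum_r_lo : 2 + 3 * u^2/4 <= / sp + / sm.
Proof. pose proof rp_lo; pose proof rm_lo; lra. Qed.
Lemma sum_r_up : / sp + / sm <= 2 + 3 * u^2/4 + u^3.
Proof. pose proof rp_up; pose proof rm_up. pose proof (pu 3). lra. Qed.

Lemma sum_r3_lo : 2 <= (/ sp)^3 + (/ sm)^3.
Proof.
  assert (H1 : 1 - u/2 <= / sp).
  { pose proof rp_lo. pose proof (pu 2). pose proof (pu 3). nra. }
  assert (H2 : 1 + u/2 <= / sm).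
  { pose proof rm_lo. pose proof (pu 2). pose proof (pu 3). nra. }
  assert ((1 - u/2)^3 <= (/sp)^3) by (apply pow_incr; lra).
  assert ((1 + u/2)^3 <= (/sm)^3) by (apply pow_incr; lra).
  assert ((1 - u/2)^3 + (1 + u/2)^3 = 2 + 3/2 * u^2) by field.
  pose proof (pu 2). lra.
Qed.

Lemma sum_r3_up : (/ sp)^3 + (/ sm)^3 <= 2 + 4 * u^2.
Proof.
  pose proof rp_up as H1. pose proof rm_up as H2.
  assert (0 < / sp) by (apply Rinv_0_lt_compat; lra).
  assert (0 < / sm) by (apply Rinv_0_lt_compat; lra).
  assert ((/sp)^3 <= (1 - u/2 + 3*u^2/8)^3) by (apply pow_incr; lra).
  assert ((/sm)^3 <= (1 + u/2 + 3*u^2/8 + u^3/2)^3) by (apply pow_incr; lra).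
  assert (E: (1 - u/2 + 3*u^2/8)^3 + (1 + u/2 + 3*u^2/8 + u^3/2)^3 - 2 - 4 * u^2 =
    u^2 * (-1/4 + 3/2*u + 93/32*u^2 + 3/2*u^3 + 363/256*u^4 + 75/128*u^5 + 9/32*u^6 + 1/8*u^7)) by field.
  assert (u^2 * (-1/4 + 3/2*u + 93/32*u^2 + 3/2*u^3 + 363/256*u^4 + 75/128*u^5 + 9/32*u^6 + 1/8*u^7) <= 0).
  { assert (0 <= u^2) by apply pu.
    assert (-1/4 + 3/2*u + 93/32*u^2 + 3/2*u^3 + 363/256*u^4 + 75/128*u^5 + 9/32*u^6 + 1/8*u^7 <= 0).
    { assert (u^2 <= u) by nra. assert (u^3 <= u) by (simpl; nra).
      assert (u^4 <= u) by (simpl; nra). assert (u^5 <= u) by (simpl; nra).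
      assert (u^6 <= u) by (simpl; nra). assert (u^7 <= u) by (simpl; nra). lra. }
    nra. }
  lra.
Qed.
End SQ.

Lemma exp_pow_n (y : R) (n : nat) : exp (INR n * y) = exp y ^ n.
Proof.
  induction n as [|n IH].
  - simpl. rewrite Rmult_0_l. apply exp_0.
  - rewrite S_INR. replace ((INR n + 1) * y) with (INR n * y + y) by ring.
    rewrite exp_plus, IH. simpl. ring.
Qed.

Lemma exp_big c : 187 <= c -> c ^ 8 <= exp (c - 21).
Proof.
  intro Hc.
  replace (c - 21) with (INR 40 * ((c - 21) / 40)) by (simpl; field).
  rewrite exp_pow_n.
  assert (H1 : c / 40 <= exp ((c - 21) / 40)).
  { pose proof (exp_ineq1_le ((c - 21) / 40)). lra. }
  assert (H2 : (c / 40) ^ 40 <= exp ((c - 21) / 40) ^ 40).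
  { apply pow_incr. lra. }
  assert (H3 : 4 <= c / 40) by lra.
  assert (H4 : 4 ^ 32 <= (c / 40) ^ 32) by (apply pow_incr; lra).
  assert (E : (c / 40) ^ 40 = c ^ 8 * ((c / 40) ^ 32 / 40 ^ 8)) by field.
  assert (H5 : 1 <= (c / 40) ^ 32 / 40 ^ 8).
  { apply (Rmult_le_reg_r (40 ^ 8)). apply pow_lt; lra.
    unfold Rdiv. rewrite Rmult_assoc, Rinv_l, Rmult_1_r. 2: apply pow_nonzero; lra.
    eapply Rle_trans; [|exact H4]. simpl. lra. }
  assert (0 <= c ^ 8) by (apply pow_le; lra).
  nra.
Qed.

Section Core.
Variables c a p m : R.
Hypothesis Hc : 187 <= c.
Hypothesis Ha : 14.8 <= a <= 14.81.
Hypothesis Hp : 0 < p.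
Hypothesis Hm : 0 < m.
Hypothesis Ep : p ^ 2 = c ^ 2 + a.
Hypothesis Em : m ^ 2 = c ^ 2 - a.

Let u := a / c ^ 2.
Let w := / c.

Lemma c_pos : 0 < c. Proof. lra. Qed.

Lemma u_small : 0 < u <= / 2000.
Proof.
  unfold u. split. apply Rdiv_lt_0_compat; nra.
  apply (Rmult_le_reg_r (c ^ 2)). nra. unfold Rdiv. rewrite Rmult_assoc, Rinv_l by nra.
  assert (187 ^ 2 <= c ^ 2) by (apply pow_incr; lra). lra.
Qed.

Lemma Esp : (p / c) ^ 2 = 1 + u.
Proof. unfold u. unfold Rdiv. rewrite Rpow_mult_distr, Ep. field. lra. Qed.
Lemma Esm : (m / c) ^ 2 = 1 - u.
Proof. unfold u. unfold Rdiv. rewrite Rpow_mult_distr, Em. field. lra. Qed.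
Lemma Hsp : 0 < p / c. Proof. apply Rdiv_lt_0_compat; lra. Qed.
Lemma Hsm : 0 < m / c. Proof. apply Rdiv_lt_0_compat; lra. Qed.
Lemma Hu1 : 0 < u <= / 1000. Proof. pose proof u_small; lra. Qed.

Lemma w_pos : 0 < w. Proof. unfold w; apply Rinv_0_lt_compat; lra. Qed.
Lemma w_small : w <= / 187. Proof. unfold w; apply Rinv_le_contravar; lra. Qed.
Lemma u_w : u = a * w ^ 2. Proof. unfold u, w. field. lra. Qed.

Lemma d0_up : p + m - 2 * c <= - (a ^ 2 / 4) * w ^ 3.
Proof.
  pose proof (sum_s_up u (p/c) (m/c) Hu1 Hsp Hsm Esp Esm) as H.
  assert (E : p + m - 2 * c = c * (p / c + m / c - 2)) by (field; lra).
  rewrite E.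
  assert (E2 : - (a ^ 2 / 4) * w ^ 3 = c * (- u ^ 2 / 4)) by (unfold u, w; field; lra).
  rewrite E2. apply Rmult_le_compat_l; lra.
Qed.

Lemma d0_lo : - (a ^ 2 / 4) * w ^ 3 - a ^ 3 / 8 * w ^ 5 <= p + m - 2 * c.
Proof.
  pose proof (sum_s_lo u (p/c) (m/c) Hu1 Hsp Hsm Esp Esm) as H.
  assert (E : p + m - 2 * c = c * (p / c + m / c - 2)) by (field; lra).
  rewrite E.
  assert (E2 : - (a ^ 2 / 4) * w ^ 3 - a ^ 3 / 8 * w ^ 5 = c * (- u ^ 2 / 4 - u ^ 3 / 8))
    by (unfold u, w; field; lra).
  rewrite E2. apply Rmult_le_compat_l; lra.
Qed.

Lemma D1_lo : 3 * a ^ 2 / 4 * w ^ 5 <= / p + / m - 2 / c.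
Proof.
  pose proof (sum_r_lo u (p/c) (m/c) Hu1 Hsp Hsm Esp Esm) as H.
  assert (E : / p + / m - 2 / c = w * (/ (p / c) + / (m / c) - 2)) by (unfold w; field; lra).
  rewrite E.
  assert (E2 : 3 * a ^ 2 / 4 * w ^ 5 = w * (3 * u ^ 2 / 4)) by (unfold u, w; field; lra).
  rewrite E2. pose proof w_pos. apply Rmult_le_compat_l; lra.
Qed.

Lemma D1_up : / p + / m - 2 / c <= 3 * a ^ 2 / 4 * w ^ 5 + a ^ 3 * w ^ 7.
Proof.
  pose proof (sum_r_up u (p/c) (m/c) Hu1 Hsp Hsm Esp Esm) as H.
  assert (E : / p + / m - 2 / c = w * (/ (p / c) + / (m / c) - 2)) by (unfold w; field; lra).
  rewrite E.
  assert (E2 : 3 * a ^ 2 / 4 * w ^ 5 + a ^ 3 * w ^ 7 = w * (3 * u ^ 2 / 4 + u ^ 3))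
    by (unfold u, w; field; lra).
  rewrite E2. pose proof w_pos. apply Rmult_le_compat_l; lra.
Qed.

Lemma D3_lo : 0 <= / p ^ 3 + / m ^ 3 - 2 / c ^ 3.
Proof.
  pose proof (sum_r3_lo u (p/c) (m/c) Hu1 Hsp Hsm Esp Esm) as H.
  assert (E : / p ^ 3 + / m ^ 3 - 2 / c ^ 3 = w ^ 3 * ((/ (p / c)) ^ 3 + (/ (m / c)) ^ 3 - 2))
    by (unfold w; field; lra).
  rewrite E. pose proof w_pos. apply Rmult_le_pos. apply pow_le; lra. lra.
Qed.

Lemma D3_up : / p ^ 3 + / m ^ 3 - 2 / c ^ 3 <= 4 * a ^ 2 * w ^ 7.
Proof.
  pose proof (sum_r3_up u (p/c) (m/c) Hu1 Hsp Hsm Esp Esm) as H.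
  assert (E : / p ^ 3 + / m ^ 3 - 2 / c ^ 3 = w ^ 3 * ((/ (p / c)) ^ 3 + (/ (m / c)) ^ 3 - 2))
    by (unfold w; field; lra).
  rewrite E.
  assert (E2 : 4 * a ^ 2 * w ^ 7 = w ^ 3 * (4 * u ^ 2)) by (unfold u, w; field; lra).
  rewrite E2. pose proof w_pos. apply Rmult_le_compat_l. apply pow_le; lra. lra.
Qed.

Lemma Ep2 : p ^ 2 = (1 + u) / w ^ 2.
Proof. rewrite Ep. unfold u, w. field. lra. Qed.
Lemma Em2 : m ^ 2 = (1 - u) / w ^ 2.
Proof. rewrite Em. unfold u, w. field. lra. Qed.

Lemma D2_eq : / p ^ 2 + / m ^ 2 - 2 / c ^ 2 = w ^ 2 * (2 * u ^ 2 / (1 - u ^ 2)).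
Proof.
  pose proof Hu1. pose proof w_pos.
  rewrite Ep2, Em2. replace (2 / c ^ 2) with (2 * w ^ 2) by (unfold w; field; lra).
  field. repeat split; nra.
Qed.

Lemma D2_lo : 2 * a ^ 2 * w ^ 6 <= / p ^ 2 + / m ^ 2 - 2 / c ^ 2.
Proof.
  rewrite D2_eq. pose proof Hu1. pose proof w_pos.
  assert (E : 2 * a ^ 2 * w ^ 6 = w ^ 2 * (2 * u ^ 2)) by (rewrite u_w; ring).
  rewrite E. apply Rmult_le_compat_l. nra.
  assert (0 < 1 - u ^ 2) by nra.
  assert (1 <= / (1 - u ^ 2)) by (rewrite <- Rinv_1; apply Rinv_le_contravar; nra).
  assert (/ (1 - u ^ 2) <= 3 / 2) by (replace (3/2) with (/ (2/3)) by (field); apply Rinv_le_contravar; nra).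
  unfold Rdiv. assert (0 <= u ^ 2) by nra. nra.
Qed.

Lemma D2_up : / p ^ 2 + / m ^ 2 - 2 / c ^ 2 <= 3 * a ^ 2 * w ^ 6.
Proof.
  rewrite D2_eq. pose proof Hu1. pose proof w_pos.
  assert (E : 3 * a ^ 2 * w ^ 6 = w ^ 2 * (3 * u ^ 2)) by (rewrite u_w; ring).
  rewrite E. apply Rmult_le_compat_l. nra.
  assert (0 < 1 - u ^ 2) by nra.
  assert (1 <= / (1 - u ^ 2)) by (rewrite <- Rinv_1; apply Rinv_le_contravar; nra).
  assert (/ (1 - u ^ 2) <= 3 / 2) by (replace (3/2) with (/ (2/3)) by (field); apply Rinv_le_contravar; nra).
  unfold Rdiv. assert (0 <= u ^ 2) by nra. nra.
Qed.

Lemma E4_up : / (2 * m ^ 4) - / (2 * c ^ 4) <= (501/500) * a * w ^ 6.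
Proof.
  pose proof u_small. pose proof w_pos.
  replace (m ^ 4) with ((m ^ 2) ^ 2) by ring. rewrite Em2.
  assert (E : / (2 * ((1 - u) / w ^ 2) ^ 2) - / (2 * c ^ 4) = w ^ 4 * ((2 * u - u ^ 2) / (2 * (1 - u) ^ 2)))
    by (unfold w; field; split; lra).
  rewrite E.
  assert (E2 : (501/500) * a * w ^ 6 = w ^ 4 * ((501/500) * u)) by (rewrite u_w; ring).
  rewrite E2. apply Rmult_le_compat_l. apply pow_le; lra.
  assert (0 < 2 * (1 - u) ^ 2) by nra.
  assert (/ (2 * (1 - u) ^ 2) <= / 2 * (501/500)).
  { replace (/ 2 * (501/500)) with (/ (2 / (501/500))) by (field).
    apply Rinv_le_contravar. lra.
    assert (1999/2000 <= 1 - u) by lra.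
    assert ((1999/2000)^2 <= (1-u)^2) by (apply pow_incr; lra). lra. }
  assert (0 <= 2 * u - u ^ 2) by nra.
  unfold Rdiv. assert (0 <= u ^ 2) by nra. nra.
Qed.

Lemma E4_lo : - a * w ^ 6 - a ^ 2 / 2 * w ^ 8 <= / (2 * p ^ 4) - / (2 * c ^ 4).
Proof.
  pose proof u_small. pose proof w_pos.
  replace (p ^ 4) with ((p ^ 2) ^ 2) by ring. rewrite Ep2.
  assert (E : / (2 * ((1 + u) / w ^ 2) ^ 2) - / (2 * c ^ 4) = - (w ^ 4 * ((2 * u + u ^ 2) / (2 * (1 + u) ^ 2))))
    by (unfold w; field; split; lra).
  rewrite E.
  assert (E2 : - a * w ^ 6 - a ^ 2 / 2 * w ^ 8 = - (w ^ 4 * ((2 * u + u ^ 2) / 2))) by (rewrite u_w; field).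
  rewrite E2. apply Ropp_le_contravar. apply Rmult_le_compat_l. apply pow_le; lra.
  assert (0 < 2 * (1 + u) ^ 2) by nra.
  assert (/ (2 * (1 + u) ^ 2) <= / 2) by (apply Rinv_le_contravar; nra).
  assert (0 <= 2 * u + u ^ 2) by nra.
  unfold Rdiv. assert (0 <= u ^ 2) by nra. nra.
Qed.
End Core.

Lemma box2 (x y lo1 hi1 lo2 hi2 : R) (j l : nat) : 0 <= lo1 -> lo1 <= x <= hi1 -> 0 <= lo2 -> lo2 <= y <= hi2 ->
  lo1 ^ j * lo2 ^ l <= x ^ j * y ^ l <= hi1 ^ j * hi2 ^ l.
Proof.
  intros H1 [H2 H3] H4 [H5 H6]. split.
  - apply Rmult_le_compat; try (apply pow_le; lra); apply pow_incr; lra.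
  - apply Rmult_le_compat; try (apply pow_le; lra); apply pow_incr; lra.
Qed.

Lemma F2 (w a A : R) : 0 < w <= / 187 -> (29607/2000) <= a <= (29609/2000) -> (547859/10000) <= A <= (273967/5000) ->
  (1 + (- A*w^3 - (45/8)*A*w^5 - (15/2)*A*w^6 + (501/500)*a*w^6 + 4*w^8) + (- A*w^3 - (45/8)*A*w^5 - (15/2)*A*w^6 + (501/500)*a*w^6 + 4*w^8)^2/2) <= ((1 - A*w^3 + A^2*w^6)*(1 - 308*w^5 - 286*w^6)).
Proof.
  intros Hw Ha HA.
  assert (E : ((1 - A*w^3 + A^2*w^6)*(1 - 308*w^5 - 286*w^6)) - (1 + (- A*w^3 - (45/8)*A*w^5 - (15/2)*A*w^6 + (501/500)*a*w^6 + 4*w^8) + (- A*w^3 - (45/8)*A*w^5 - (15/2)*A*w^6 + (501/500)*a*w^6 + 4*w^8)^2/2) = w^5 * (w^0*((-308) + (45/8)*A^1) + w^1*((-286) + (-501/500)*a^1 + (15/2)*A^1 + (1/2)*A^2) + w^3*((-4) + (308)*A^1 + (-45/8)*A^2) + w^4*((286)*A^1 + (501/500)*A^1*a^1 + (-15/2)*A^2) + w^5*((-2025/128)*A^2) + w^6*((4)*A^1 + (4509/800)*A^1*a^1 + (-5603/16)*A^2) + w^7*((-251001/500000)*a^2 + (1503/200)*A^1*a^1 + (-2513/8)*A^2) + w^8*((45/2)*A^1) + w^9*((-501/125)*a^1 + (30)*A^1) + w^11*((-8)))) by (field).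
  assert (Hw0 : 0 <= w) by lra.
  pose proof (box2 A a (547859/10000) (273967/5000) (29607/2000) (29609/2000) 0 0 ltac:(lra) HA ltac:(lra) Ha) as M0_0.
  pose proof (box2 A a (547859/10000) (273967/5000) (29607/2000) (29609/2000) 1 0 ltac:(lra) HA ltac:(lra) Ha) as M0_1.
  assert (C0 : (85343/500000) <= ((-308) + (45/8)*A^1)) by lra.
  clear M0_0 M0_1.
  pose proof (box2 A a (547859/10000) (273967/5000) (29607/2000) (29609/2000) 0 0 ltac:(lra) HA ltac:(lra) Ha) as M1_0.
  pose proof (box2 A a (547859/10000) (273967/5000) (29607/2000) (29609/2000) 0 1 ltac:(lra) HA ltac:(lra) Ha) as M1_1.
  pose proof (box2 A a (547859/10000) (273967/5000) (29607/2000) (29609/2000) 1 0 ltac:(lra) HA ltac:(lra) Ha) as M1_2.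
  pose proof (box2 A a (547859/10000) (273967/5000) (29607/2000) (29609/2000) 2 0 ltac:(lra) HA ltac:(lra) Ha) as M1_3.
  assert (C1 : (1610807559/1000000) <= ((-286) + (-501/500)*a^1 + (15/2)*A^1 + (1/2)*A^2)) by lra.
  clear M1_0 M1_1 M1_2 M1_3.
  assert (Wp1 : 0 <= w^1) by (apply pow_le; lra).
  assert (H1 : w^1 * (1610807559/1000000) <= w^1 * ((-286) + (-501/500)*a^1 + (15/2)*A^1 + (1/2)*A^2)) by (apply Rmult_le_compat_l; lra).
  pose proof (box2 A a (547859/10000) (273967/5000) (29607/2000) (29609/2000) 0 0 ltac:(lra) HA ltac:(lra) Ha) as M3_0.
  pose proof (box2 A a (547859/10000) (273967/5000) (29607/2000) (29609/2000) 1 0 ltac:(lra) HA ltac:(lra) Ha) as M3_1.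
  pose proof (box2 A a (547859/10000) (273967/5000) (29607/2000) (29609/2000) 2 0 ltac:(lra) HA ltac:(lra) Ha) as M3_2.
  assert (C3 : (-8987073/500000) <= ((-4) + (308)*A^1 + (-45/8)*A^2)) by lra.
  clear M3_0 M3_1 M3_2.
  assert (Wp3 : 0 <= w^3) by (apply pow_le; lra).
  assert (H3 : w^3 * (-8987073/500000) <= w^3 * ((-4) + (308)*A^1 + (-45/8)*A^2)) by (apply Rmult_le_compat_l; lra).
  assert (Wb3 : w^3 <= w * (1/34969)) by (replace (w^3) with (w * w^2) by ring; apply Rmult_le_compat_l; [lra|]; replace (1/34969) with ((/187)^2) by (field); apply pow_incr; lra).
  pose proof (box2 A a (547859/10000) (273967/5000) (29607/2000) (29609/2000) 1 0 ltac:(lra) HA ltac:(lra) Ha) as M4_0.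
  pose proof (box2 A a (547859/10000) (273967/5000) (29607/2000) (29609/2000) 1 1 ltac:(lra) HA ltac:(lra) Ha) as M4_1.
  pose proof (box2 A a (547859/10000) (273967/5000) (29607/2000) (29609/2000) 2 0 ltac:(lra) HA ltac:(lra) Ha) as M4_2.
  assert (C4 : (-603596261/100000) <= ((286)*A^1 + (501/500)*A^1*a^1 + (-15/2)*A^2)) by lra.
  clear M4_0 M4_1 M4_2.
  assert (Wp4 : 0 <= w^4) by (apply pow_le; lra).
  assert (H4 : w^4 * (-603596261/100000) <= w^4 * ((286)*A^1 + (501/500)*A^1*a^1 + (-15/2)*A^2)) by (apply Rmult_le_compat_l; lra).
  assert (Wb4 : w^4 <= w * (1/6539203)) by (replace (w^4) with (w * w^3) by ring; apply Rmult_le_compat_l; [lra|]; replace (1/6539203) with ((/187)^3) by (field); apply pow_incr; lra).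
  pose proof (box2 A a (547859/10000) (273967/5000) (29607/2000) (29609/2000) 2 0 ltac:(lra) HA ltac:(lra) Ha) as M5_0.
  assert (C5 : (-23748794079/500000) <= ((-2025/128)*A^2)) by lra.
  clear M5_0.
  assert (Wp5 : 0 <= w^5) by (apply pow_le; lra).
  assert (H5 : w^5 * (-23748794079/500000) <= w^5 * ((-2025/128)*A^2)) by (apply Rmult_le_compat_l; lra).
  assert (Wb5 : w^5 <= w * (1/1222830961)) by (replace (w^5) with (w * w^4) by ring; apply Rmult_le_compat_l; [lra|]; replace (1/1222830961) with ((/187)^4) by (field); apply pow_incr; lra).
  pose proof (box2 A a (547859/10000) (273967/5000) (29607/2000) (29609/2000) 1 0 ltac:(lra) HA ltac:(lra) Ha) as M6_0.
  pose proof (box2 A a (547859/10000) (273967/5000) (29607/2000) (29609/2000) 1 1 ltac:(lra) HA ltac:(lra) Ha) as M6_1.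
  pose proof (box2 A a (547859/10000) (273967/5000) (29607/2000) (29609/2000) 2 0 ltac:(lra) HA ltac:(lra) Ha) as M6_2.
  assert (C6 : (-1046583501243/1000000) <= ((4)*A^1 + (4509/800)*A^1*a^1 + (-5603/16)*A^2)) by lra.
  clear M6_0 M6_1 M6_2.
  assert (Wp6 : 0 <= w^6) by (apply pow_le; lra).
  assert (H6 : w^6 * (-1046583501243/1000000) <= w^6 * ((4)*A^1 + (4509/800)*A^1*a^1 + (-5603/16)*A^2)) by (apply Rmult_le_compat_l; lra).
  assert (Wb6 : w^6 <= w * (1/228669389707)) by (replace (w^6) with (w * w^5) by ring; apply Rmult_le_compat_l; [lra|]; replace (1/228669389707) with ((/187)^5) by (field); apply pow_incr; lra).
  pose proof (box2 A a (547859/10000) (273967/5000) (29607/2000) (29609/2000) 0 2 ltac:(lra) HA ltac:(lra) Ha) as M7_0.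
  pose proof (box2 A a (547859/10000) (273967/5000) (29607/2000) (29609/2000) 1 1 ltac:(lra) HA ltac:(lra) Ha) as M7_1.
  pose proof (box2 A a (547859/10000) (273967/5000) (29607/2000) (29609/2000) 2 0 ltac:(lra) HA ltac:(lra) Ha) as M7_2.
  assert (C7 : (-937117915243/1000000) <= ((-251001/500000)*a^2 + (1503/200)*A^1*a^1 + (-2513/8)*A^2)) by lra.
  clear M7_0 M7_1 M7_2.
  assert (Wp7 : 0 <= w^7) by (apply pow_le; lra).
  assert (H7 : w^7 * (-937117915243/1000000) <= w^7 * ((-251001/500000)*a^2 + (1503/200)*A^1*a^1 + (-2513/8)*A^2)) by (apply Rmult_le_compat_l; lra).
  assert (Wb7 : w^7 <= w * (1/42761175875209)) by (replace (w^7) with (w * w^6) by ring; apply Rmult_le_compat_l; [lra|]; replace (1/42761175875209) with ((/187)^6) by (field); apply pow_incr; lra).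
  pose proof (box2 A a (547859/10000) (273967/5000) (29607/2000) (29609/2000) 1 0 ltac:(lra) HA ltac:(lra) Ha) as M8_0.
  assert (C8 : (1232682749/1000000) <= ((45/2)*A^1)) by lra.
  clear M8_0.
  assert (Wp8 : 0 <= w^8) by (apply pow_le; lra).
  assert (H8 : w^8 * (1232682749/1000000) <= w^8 * ((45/2)*A^1)) by (apply Rmult_le_compat_l; lra).
  pose proof (box2 A a (547859/10000) (273967/5000) (29607/2000) (29609/2000) 0 1 ltac:(lra) HA ltac:(lra) Ha) as M9_0.
  pose proof (box2 A a (547859/10000) (273967/5000) (29607/2000) (29609/2000) 1 0 ltac:(lra) HA ltac:(lra) Ha) as M9_1.
  assert (C9 : (1584240563/1000000) <= ((-501/125)*a^1 + (30)*A^1)) by lra.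
  clear M9_0 M9_1.
  assert (Wp9 : 0 <= w^9) by (apply pow_le; lra).
  assert (H9 : w^9 * (1584240563/1000000) <= w^9 * ((-501/125)*a^1 + (30)*A^1)) by (apply Rmult_le_compat_l; lra).
  pose proof (box2 A a (547859/10000) (273967/5000) (29607/2000) (29609/2000) 0 0 ltac:(lra) HA ltac:(lra) Ha) as M11_0.
  assert (C11 : (-8000001/1000000) <= ((-8))) by lra.
  clear M11_0.
  assert (Wp11 : 0 <= w^11) by (apply pow_le; lra).
  assert (H11 : w^11 * (-8000001/1000000) <= w^11 * ((-8))) by (apply Rmult_le_compat_l; lra).
  assert (Wb11 : w^11 <= w * (1/52289689788971837545849)) by (replace (w^11) with (w * w^10) by ring; apply Rmult_le_compat_l; [lra|]; replace (1/52289689788971837545849) with ((/187)^10) by (field); apply pow_incr; lra).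
  assert (HG : 0 <= w^0*((-308) + (45/8)*A^1) + w^1*((-286) + (-501/500)*a^1 + (15/2)*A^1 + (1/2)*A^2) + w^3*((-4) + (308)*A^1 + (-45/8)*A^2) + w^4*((286)*A^1 + (501/500)*A^1*a^1 + (-15/2)*A^2) + w^5*((-2025/128)*A^2) + w^6*((4)*A^1 + (4509/800)*A^1*a^1 + (-5603/16)*A^2) + w^7*((-251001/500000)*a^2 + (1503/200)*A^1*a^1 + (-2513/8)*A^2) + w^8*((45/2)*A^1) + w^9*((-501/125)*a^1 + (30)*A^1) + w^11*((-8))) by lra.
  assert (0 <= w^5) by (apply pow_le; lra).
  assert (0 <= w^5 * (w^0*((-308) + (45/8)*A^1) + w^1*((-286) + (-501/500)*a^1 + (15/2)*A^1 + (1/2)*A^2) + w^3*((-4) + (308)*A^1 + (-45/8)*A^2) + w^4*((286)*A^1 + (501/500)*A^1*a^1 + (-15/2)*A^2) + w^5*((-2025/128)*A^2) + w^6*((4)*A^1 + (4509/800)*A^1*a^1 + (-5603/16)*A^2) + w^7*((-251001/500000)*a^2 + (1503/200)*A^1*a^1 + (-2513/8)*A^2) + w^8*((45/2)*A^1) + w^9*((-501/125)*a^1 + (30)*A^1) + w^11*((-8)))) by (apply Rmult_le_pos; lra).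
  lra.
Qed.

Lemma F3 (w a A : R) : 0 < w <= / 187 -> (29607/2000) <= a <= (29609/2000) -> (547859/10000) <= A <= (273967/5000) ->
  ((1 - A*w^3 - a^3*w^5 - (5/128)*a^4*w^7)*(1 - 309*w^5 - 535*w^6)) <= (1 + (- A*w^3 - (1/8)*a^3*w^5 - (15/8)*(3*A*w^5 + a^3*w^7) - (45/16)*a^2*w^6 - (45/32)*a^2*w^7 - a*w^6 - (1/2)*a^2*w^8 - 4*w^8)).
Proof.
  intros Hw Ha HA.
  assert (E : (1 + (- A*w^3 - (1/8)*a^3*w^5 - (15/8)*(3*A*w^5 + a^3*w^7) - (45/16)*a^2*w^6 - (45/32)*a^2*w^7 - a*w^6 - (1/2)*a^2*w^8 - 4*w^8)) - ((1 - A*w^3 - a^3*w^5 - (5/128)*a^4*w^7)*(1 - 309*w^5 - 535*w^6)) = w^5 * (w^0*((309) + (7/8)*a^3 + (-45/8)*A^1) + w^1*((535) + (-1)*a^1 + (-45/16)*a^2) + w^2*((-45/32)*a^2 + (-15/8)*a^3 + (5/128)*a^4) + w^3*((-4) + (-1/2)*a^2 + (-309)*A^1) + w^4*((-535)*A^1) + w^5*((-309)*a^3) + w^6*((-535)*a^3) + w^7*((-1545/128)*a^4) + w^8*((-2675/128)*a^4))) by (field).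
  assert (Hw0 : 0 <= w) by lra.
  pose proof (box2 A a (547859/10000) (273967/5000) (29607/2000) (29609/2000) 0 0 ltac:(lra) HA ltac:(lra) Ha) as M0_0.
  pose proof (box2 A a (547859/10000) (273967/5000) (29607/2000) (29609/2000) 0 3 ltac:(lra) HA ltac:(lra) Ha) as M0_1.
  pose proof (box2 A a (547859/10000) (273967/5000) (29607/2000) (29609/2000) 1 0 ltac:(lra) HA ltac:(lra) Ha) as M0_2.
  assert (C0 : (2839368029/1000000) <= ((309) + (7/8)*a^3 + (-45/8)*A^1)) by lra.
  clear M0_0 M0_1 M0_2.
  pose proof (box2 A a (547859/10000) (273967/5000) (29607/2000) (29609/2000) 0 0 ltac:(lra) HA ltac:(lra) Ha) as M1_0.
  pose proof (box2 A a (547859/10000) (273967/5000) (29607/2000) (29609/2000) 0 1 ltac:(lra) HA ltac:(lra) Ha) as M1_1.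
  pose proof (box2 A a (547859/10000) (273967/5000) (29607/2000) (29609/2000) 0 2 ltac:(lra) HA ltac:(lra) Ha) as M1_2.
  assert (C1 : (-48114591/500000) <= ((535) + (-1)*a^1 + (-45/16)*a^2)) by lra.
  clear M1_0 M1_1 M1_2.
  assert (Wp1 : 0 <= w^1) by (apply pow_le; lra).
  assert (H1 : w^1 * (-48114591/500000) <= w^1 * ((535) + (-1)*a^1 + (-45/16)*a^2)) by (apply Rmult_le_compat_l; lra).
  pose proof (box2 A a (547859/10000) (273967/5000) (29607/2000) (29609/2000) 0 2 ltac:(lra) HA ltac:(lra) Ha) as M2_0.
  pose proof (box2 A a (547859/10000) (273967/5000) (29607/2000) (29609/2000) 0 3 ltac:(lra) HA ltac:(lra) Ha) as M2_1.
  pose proof (box2 A a (547859/10000) (273967/5000) (29607/2000) (29609/2000) 0 4 ltac:(lra) HA ltac:(lra) Ha) as M2_2.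
  assert (C2 : (-4516183993/1000000) <= ((-45/32)*a^2 + (-15/8)*a^3 + (5/128)*a^4)) by lra.
  clear M2_0 M2_1 M2_2.
  assert (Wp2 : 0 <= w^2) by (apply pow_le; lra).
  assert (H2 : w^2 * (-4516183993/1000000) <= w^2 * ((-45/32)*a^2 + (-15/8)*a^3 + (5/128)*a^4)) by (apply Rmult_le_compat_l; lra).
  assert (Wb2 : w^2 <= w * (1/187)) by (replace (w^2) with (w * w^1) by ring; apply Rmult_le_compat_l; [lra|]; replace (1/187) with ((/187)^1) by (field); apply pow_incr; lra).
  pose proof (box2 A a (547859/10000) (273967/5000) (29607/2000) (29609/2000) 0 0 ltac:(lra) HA ltac:(lra) Ha) as M3_0.
  pose proof (box2 A a (547859/10000) (273967/5000) (29607/2000) (29609/2000) 0 2 ltac:(lra) HA ltac:(lra) Ha) as M3_1.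
  pose proof (box2 A a (547859/10000) (273967/5000) (29607/2000) (29609/2000) 1 0 ltac:(lra) HA ltac:(lra) Ha) as M3_2.
  assert (C3 : (-17044747211/1000000) <= ((-4) + (-1/2)*a^2 + (-309)*A^1)) by lra.
  clear M3_0 M3_1 M3_2.
  assert (Wp3 : 0 <= w^3) by (apply pow_le; lra).
  assert (H3 : w^3 * (-17044747211/1000000) <= w^3 * ((-4) + (-1/2)*a^2 + (-309)*A^1)) by (apply Rmult_le_compat_l; lra).
  assert (Wb3 : w^3 <= w * (1/34969)) by (replace (w^3) with (w * w^2) by ring; apply Rmult_le_compat_l; [lra|]; replace (1/34969) with ((/187)^2) by (field); apply pow_incr; lra).
  pose proof (box2 A a (547859/10000) (273967/5000) (29607/2000) (29609/2000) 1 0 ltac:(lra) HA ltac:(lra) Ha) as M4_0.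
  assert (C4 : (-29314469001/1000000) <= ((-535)*A^1)) by lra.
  clear M4_0.
  assert (Wp4 : 0 <= w^4) by (apply pow_le; lra).
  assert (H4 : w^4 * (-29314469001/1000000) <= w^4 * ((-535)*A^1)) by (apply Rmult_le_compat_l; lra).
  assert (Wb4 : w^4 <= w * (1/6539203)) by (replace (w^4) with (w * w^3) by ring; apply Rmult_le_compat_l; [lra|]; replace (1/6539203) with ((/187)^3) by (field); apply pow_incr; lra).
  pose proof (box2 A a (547859/10000) (273967/5000) (29607/2000) (29609/2000) 0 3 ltac:(lra) HA ltac:(lra) Ha) as M5_0.
  assert (C5 : (-1002627731211/1000000) <= ((-309)*a^3)) by lra.
  clear M5_0.
  assert (Wp5 : 0 <= w^5) by (apply pow_le; lra).
  assert (H5 : w^5 * (-1002627731211/1000000) <= w^5 * ((-309)*a^3)) by (apply Rmult_le_compat_l; lra).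
  assert (Wb5 : w^5 <= w * (1/1222830961)) by (replace (w^5) with (w * w^4) by ring; apply Rmult_le_compat_l; [lra|]; replace (1/1222830961) with ((/187)^4) by (field); apply pow_incr; lra).
  pose proof (box2 A a (547859/10000) (273967/5000) (29607/2000) (29609/2000) 0 3 ltac:(lra) HA ltac:(lra) Ha) as M6_0.
  assert (C6 : (-433985304367/250000) <= ((-535)*a^3)) by lra.
  clear M6_0.
  assert (Wp6 : 0 <= w^6) by (apply pow_le; lra).
  assert (H6 : w^6 * (-433985304367/250000) <= w^6 * ((-535)*a^3)) by (apply Rmult_le_compat_l; lra).
  assert (Wb6 : w^6 <= w * (1/228669389707)) by (replace (w^6) with (w * w^5) by ring; apply Rmult_le_compat_l; [lra|]; replace (1/228669389707) with ((/187)^5) by (field); apply pow_incr; lra).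
  pose proof (box2 A a (547859/10000) (273967/5000) (29607/2000) (29609/2000) 0 4 ltac:(lra) HA ltac:(lra) Ha) as M7_0.
  assert (C7 : (-289910200131/500000) <= ((-1545/128)*a^4)) by lra.
  clear M7_0.
  assert (Wp7 : 0 <= w^7) by (apply pow_le; lra).
  assert (H7 : w^7 * (-289910200131/500000) <= w^7 * ((-1545/128)*a^4)) by (apply Rmult_le_compat_l; lra).
  assert (Wb7 : w^7 <= w * (1/42761175875209)) by (replace (w^7) with (w * w^6) by ring; apply Rmult_le_compat_l; [lra|]; replace (1/42761175875209) with ((/187)^6) by (field); apply pow_incr; lra).
  pose proof (box2 A a (547859/10000) (273967/5000) (29607/2000) (29609/2000) 0 4 ltac:(lra) HA ltac:(lra) Ha) as M8_0.
  assert (C8 : (-501948081133/500000) <= ((-2675/128)*a^4)) by lra.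
  clear M8_0.
  assert (Wp8 : 0 <= w^8) by (apply pow_le; lra).
  assert (H8 : w^8 * (-501948081133/500000) <= w^8 * ((-2675/128)*a^4)) by (apply Rmult_le_compat_l; lra).
  assert (Wb8 : w^8 <= w * (1/7996339888664083)) by (replace (w^8) with (w * w^7) by ring; apply Rmult_le_compat_l; [lra|]; replace (1/7996339888664083) with ((/187)^7) by (field); apply pow_incr; lra).
  assert (HG : 0 <= w^0*((309) + (7/8)*a^3 + (-45/8)*A^1) + w^1*((535) + (-1)*a^1 + (-45/16)*a^2) + w^2*((-45/32)*a^2 + (-15/8)*a^3 + (5/128)*a^4) + w^3*((-4) + (-1/2)*a^2 + (-309)*A^1) + w^4*((-535)*A^1) + w^5*((-309)*a^3) + w^6*((-535)*a^3) + w^7*((-1545/128)*a^4) + w^8*((-2675/128)*a^4)) by lra.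
  assert (0 <= w^5) by (apply pow_le; lra).
  assert (0 <= w^5 * (w^0*((309) + (7/8)*a^3 + (-45/8)*A^1) + w^1*((535) + (-1)*a^1 + (-45/16)*a^2) + w^2*((-45/32)*a^2 + (-15/8)*a^3 + (5/128)*a^4) + w^3*((-4) + (-1/2)*a^2 + (-309)*A^1) + w^4*((-535)*A^1) + w^5*((-309)*a^3) + w^6*((-535)*a^3) + w^7*((-1545/128)*a^4) + w^8*((-2675/128)*a^4))) by (apply Rmult_le_pos; lra).
  lra.
Qed.


Lemma PI_bounds : 3.14159 <= PI <= 3.1416.
Proof.
  destruct (PI_2_3_7_ineq 2) as [H1 H2].
  unfold sum_f_R0, tg_alt, PI_2_3_7_tg, Ratan_seq in H1, H2. simpl in H1, H2.
  lra.
Qed.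

Lemma exp_le_quad x : x <= 0 -> exp x <= 1 + x + x ^ 2 / 2.
Proof.
  intro Hx.
  assert (H : - (1 + x + x ^ 2 / 2 - exp x) <= - (1 + 0 + 0 ^ 2 / 2 - exp 0)).
  { apply (mono_le (fun t => - (1 + t + t ^ 2 / 2 - exp t)) (fun t => - (1 + t - exp t))); [lra| |].
    - intros t Ht. auto_derive. exact I. field.
    - intros t Ht. pose proof (exp_ineq1_le t). lra. }
  rewrite exp_0 in H. lra.
Qed.

Lemma exp_ge_lin x : 1 + x <= exp x.
Proof. apply exp_ineq1_le. Qed.

Definition Q0' (x : R) := - 15 / 8 * / x - 15 / 16 * / x ^ 2 - 45 / 128 * / x ^ 3.
Lemma Q0_eq x : 0 < x -> Q0 x = Q0' x.
Proof. intro; unfold Q0, Q0'; field; lra. Qed.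

Ltac inst H := repeat match type of H with ?P -> _ => specialize (H ltac:(assumption)) end.

Section Main.
Variables c a p m : R.
Hypothesis Hc : 187 <= c.
Hypothesis Ha : 29607/2000 <= a <= 29609/2000.
Hypothesis Hp : 0 < p.
Hypothesis Hm : 0 < m.
Hypothesis Ep : p ^ 2 = c ^ 2 + a.
Hypothesis Em : m ^ 2 = c ^ 2 - a.

Let w := / c.
Let A := a ^ 2 / 4.
Let ee (x : R) := exp (- (x - x0)).

Lemma Ha' : 14.8 <= a <= 14.81. Proof. lra. Qed.

Lemma m_ge : c - 1 <= m.
Proof.
  assert ((c - 1) ^ 2 <= m ^ 2) by nra.
  apply sq_le; nra.
Qed.

Lemma p_ge : c <= p.
Proof. nra. Qed.
Lemma m_le : m <= c.
Proof. nra. Qed.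

Lemma ee_small : ee m <= w ^ 8.
Proof.
  unfold ee, w, x0. pose proof m_ge. pose proof (exp_big c Hc).
  assert (exp (- (m - 20)) <= exp (- (c - 21))) by (apply exp_le_mono; lra).
  assert (exp (- (c - 21)) = / exp (c - 21)) by (rewrite <- exp_Ropp; f_equal; ring).
  assert (/ exp (c - 21) <= / c ^ 8).
  { apply Rinv_le_contravar. apply pow_lt; lra. assumption. }
  rewrite pow_inv. lra.
Qed.

Lemma ee_mono x y : x <= y -> ee y <= ee x.
Proof. intro; unfold ee; apply exp_le_mono; lra. Qed.

Let KU := (p + m - 2 * c) + (Q0 p + Q0 m - 2 * Q0 c) + (1 / (2 * m ^ 4) - 1 / (2 * c ^ 4))
          + (ee m - ee c - 4 * ee p + 4 * ee c).
Let KL := (p + m - 2 * c) + (Q0 p + Q0 m - 2 * Q0 c) + (1 / (2 * p ^ 4) - 1 / (2 * c ^ 4))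
          + (- 4 * ee m + 4 * ee c + ee p - ee c).

Lemma Q0_diff : Q0 p + Q0 m - 2 * Q0 c =
  - 15 / 8 * (/ p + / m - 2 / c) - 15 / 16 * (/ p ^ 2 + / m ^ 2 - 2 / c ^ 2)
  - 45 / 128 * (/ p ^ 3 + / m ^ 3 - 2 / c ^ 3).
Proof. unfold Q0. field. repeat split; lra. Qed.

Lemma KU_le : KU <= - A*w^3 - (45/8)*A*w^5 - (15/2)*A*w^6 + (501/500)*a*w^6 + 4*w^8.
Proof.
  unfold KU. rewrite Q0_diff. pose proof Ha' as Ha2.
  pose proof (d0_up c a p m) as H1; inst H1.
  pose proof (D1_lo c a p m) as H2; inst H2.
  pose proof (D2_lo c a p m) as H3; inst H3.
  pose proof (D3_lo c a p m) as H4; inst H4.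
  pose proof (E4_up c a p m) as H5; inst H5.
  fold w in H1, H2, H3, H4, H5.
  pose proof ee_small. pose proof (ee_mono m c m_le). pose proof (ee_mono c p p_ge).
  assert (0 < ee p) by apply exp_pos.
  replace (1 / (2 * m ^ 4) - 1 / (2 * c ^ 4)) with (/ (2 * m ^ 4) - / (2 * c ^ 4)) by (field; split; lra).
  unfold A. lra.
Qed.

Lemma KL_ge : - A*w^3 - (1/8)*a^3*w^5 - (15/8)*(3*A*w^5 + a^3*w^7) - (45/16)*a^2*w^6 - (45/32)*a^2*w^7 - a*w^6 - (1/2)*a^2*w^8 - 4*w^8 <= KL.
Proof.
  unfold KL. rewrite Q0_diff. pose proof Ha' as Ha2.
  pose proof (d0_lo c a p m) as H1; inst H1.
  pose proof (D1_up c a p m) as H2; inst H2.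
  pose proof (D2_up c a p m) as H3; inst H3.
  pose proof (D3_up c a p m) as H4; inst H4.
  pose proof (E4_lo c a p m) as H5; inst H5.
  fold w in H1, H2, H3, H4, H5.
  pose proof ee_small. pose proof (ee_mono m c m_le). pose proof (ee_mono c p p_ge).
  assert (0 < ee p) by apply exp_pos. assert (0 < ee c) by apply exp_pos.
  replace (1 / (2 * p ^ 4) - 1 / (2 * c ^ 4)) with (/ (2 * p ^ 4) - / (2 * c ^ 4)) by (field; split; lra).
  unfold A. lra.
Qed.
End Main.

Lemma ln_sqrt' x : 0 < x -> ln (sqrt x) = ln x / 2.
Proof.
  intro H. assert (0 < sqrt x) by (apply sqrt_lt_R0; lra).
  assert (E : ln x = ln (sqrt x * sqrt x)) by (rewrite sqrt_sqrt; lra).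
  rewrite ln_mult in E by lra. lra.
Qed.

Lemma exp_LN c p m : 0 < c -> 0 < p -> 0 < m ->
  exp (ln c - (ln p + ln m) / 2) = c / sqrt (p * m).
Proof.
  intros. assert (0 < sqrt (p * m)) by (apply sqrt_lt_R0; nra).
  replace ((ln p + ln m) / 2) with (ln (sqrt (p * m))).
  2:{ rewrite ln_sqrt' by nra. rewrite ln_mult by lra. lra. }
  unfold Rminus. rewrite exp_plus, exp_Ropp, !exp_ln by lra. reflexivity.
Qed.

Lemma prod_up (ym yp yc e1 e2 : R) : 0 < yc -> 0 <= ym <= yc * e1 -> 0 <= yp <= yc * e2 ->
  ym * yp / yc ^ 2 <= e1 * e2.
Proof.
  intros H1 H2 H3.
  assert (ym * yp <= (yc * e1) * (yc * e2)) by (apply Rmult_le_compat; lra).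
  replace (e1 * e2) with ((yc * e1) * (yc * e2) / yc ^ 2) by (field; lra).
  unfold Rdiv. apply Rmult_le_compat_r. apply Rlt_le, Rinv_0_lt_compat, pow_lt; lra. lra.
Qed.

Lemma prod_lo (ym yp yc e1 e2 : R) : 0 < yc -> 0 <= e1 -> 0 <= e2 -> yc * e1 <= ym -> yc * e2 <= yp ->
  e1 * e2 <= ym * yp / yc ^ 2.
Proof.
  intros H1 H0 H0' H2 H3.
  assert ((yc * e1) * (yc * e2) <= ym * yp).
  { apply Rmult_le_compat; try lra; apply Rmult_le_pos; lra. }
  replace (e1 * e2) with ((yc * e1) * (yc * e2) / yc ^ 2) by (field; lra).
  unfold Rdiv. apply Rmult_le_compat_r. apply Rlt_le, Rinv_0_lt_compat, pow_lt; lra. lra.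
Qed.

Lemma F1 (w a A : R) : 0 < w <= / 187 -> 29607/2000 <= a <= 29609/2000 -> 547859/10000 <= A <= 273967/5000 ->
  - A*w^3 - (45/8)*A*w^5 - (15/2)*A*w^6 + (501/500)*a*w^6 + 4*w^8 <= 0.
Proof.
  intros Hw Ha HA.
  assert (0 < w^3) by (apply pow_lt; lra).
  assert (w^3 <= 1) by (rewrite <- (pow1 3); apply pow_incr; lra).
  assert (E : - A*w^3 - (45/8)*A*w^5 - (15/2)*A*w^6 + (501/500)*a*w^6 + 4*w^8
    = w^3 * (- A - (45/8)*A*w^2 - (15/2)*A*w^3 + (501/500)*a*w^3 + 4*w^5)) by field.
  rewrite E.
  assert (0 <= w^2) by nra. assert (w^5 <= 1) by (rewrite <- (pow1 5); apply pow_incr; lra).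
  assert (0 <= w^5) by (apply pow_le; lra).
  assert (- A - (45/8)*A*w^2 - (15/2)*A*w^3 + (501/500)*a*w^3 + 4*w^5 <= 0).
  { assert ((501/500)*a*w^3 <= 15) by nra. assert (0 <= A*w^2) by nra. assert (0 <= A*w^3) by nra. lra. }
  nra.
Qed.

Theorem lemma4p2 (n : nat) (hn : (2363 <= n)%nat) :
  bv n / sqrt (bvp n * bvm n) * Xi n
    <= besselI2 (bvm n) * besselI2 (bvp n) / (besselI2 (bv n)) ^ 2 /\
  besselI2 (bvm n) * besselI2 (bvp n) / (besselI2 (bv n)) ^ 2
    <= bv n / sqrt (bvp n * bvm n) * Psi n.
Proof.
  pose proof PI_bounds as HPI.
  assert (Hn : 2363 <= INR n) by (apply le_INR in hn; simpl in hn; lra || (replace (INR 2363) with 2363 in hn by (simpl; lra); lra)).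
  set (a := 3 * PI ^ 2 / 2).
  assert (Ha : 29607/2000 <= a <= 29609/2000) by (unfold a; split; nra).
  assert (Hsq : forall t, 0 <= t -> (PI * sqrt t) ^ 2 = PI ^ 2 * t).
  { intros t Ht. rewrite Rpow_mult_distr. rewrite <- Rsqr_pow2 with (x := sqrt t), Rsqr_sqrt by lra. ring. }
  assert (Ec : bv n ^ 2 = PI ^ 2 * (3 * INR n / 2)) by (unfold bv; apply Hsq; lra).
  assert (Ep : bvp n ^ 2 = bv n ^ 2 + a) by (rewrite Ec; unfold bvp, a; rewrite Hsq by lra; field).
  assert (Em : bvm n ^ 2 = bv n ^ 2 - a) by (rewrite Ec; unfold bvm, a; rewrite Hsq by lra; field).
  assert (Hpos : forall t, 0 < t -> 0 < PI * sqrt t).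
  { intros t Ht. apply Rmult_lt_0_compat. pose proof PI_RGT_0; lra. apply sqrt_lt_R0; lra. }
  assert (Hc0 : 0 < bv n) by (apply Hpos; lra).
  assert (Hp : 0 < bvp n) by (apply Hpos; lra).
  assert (Hm : 0 < bvm n) by (apply Hpos; lra).
  assert (Hc : 187 <= bv n).
  { apply sq_le; try lra. rewrite Ec. nra. }
  set (c := bv n) in *. set (p := bvp n) in *. set (m := bvm n) in *.
  pose proof (m_ge c a p m) as Hmge; inst Hmge.
  pose proof (p_ge c a p) as Hpge; inst Hpge.
  pose proof (m_le c a p m) as Hmle; inst Hmle.
  assert (Hx0 : x0 = 20) by reflexivity.
  rewrite !bessel_Y.
  pose proof (Y_pos c ltac:(lra)) as Yc. pose proof (Y_pos p ltac:(lra)) as Yp'. pose proof (Y_pos m ltac:(lra)) as Ym.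
  set (w := / c).
  assert (Hw : 0 < w <= / 187) by (split; [apply Rinv_0_lt_compat; lra | apply Rinv_le_contravar; lra]).
  set (A := a ^ 2 / 4).
  assert (HA : 547859/10000 <= A <= 273967/5000) by (unfold A; split; nra).
  assert (EXU : PL m - PL c + (PU p - PU c) = (ln c - (ln p + ln m) / 2) +
     ((p + m - 2 * c) + (Q0 p + Q0 m - 2 * Q0 c) + (1 / (2 * m ^ 4) - 1 / (2 * c ^ 4))
      + (exp (- (m - x0)) - exp (- (c - x0)) - 4 * exp (- (p - x0)) + 4 * exp (- (c - x0))))).
  { unfold PL, PU. field. split; lra. }
  assert (EXL : PU m - PU c + (PL p - PL c) = (ln c - (ln p + ln m) / 2) +
     ((p + m - 2 * c) + (Q0 p + Q0 m - 2 * Q0 c) + (1 / (2 * p ^ 4) - 1 / (2 * c ^ 4))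
      + (- 4 * exp (- (m - x0)) + 4 * exp (- (c - x0)) + exp (- (p - x0)) - exp (- (c - x0))))).
  { unfold PL, PU. field. split; lra. }
  pose proof (KU_le c a p m) as HKU; inst HKU. cbv beta in HKU. fold w A in HKU.
  pose proof (KL_ge c a p m) as HKL; inst HKL. cbv beta in HKL. fold w A in HKL.
  assert (EPsi : Psi n = (1 - A*w^3 + A^2*w^6)*(1 - 308*w^5 - 286*w^6)).
  { unfold Psi. cbv zeta. fold c. unfold A, a, w. field. lra. }
  assert (EXi : Xi n = (1 - A*w^3 - a^3*w^5 - (5/128)*a^4*w^7)*(1 - 309*w^5 - 535*w^6)).
  { unfold Xi. cbv zeta. fold c. unfold A, a, w. field. lra. }
  assert (Hfac : 0 < c / sqrt (p * m)).
  { apply Rdiv_lt_0_compat; [lra|]. apply sqrt_lt_R0; nra. }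
  split.
  -
    assert (H1 : Y c * exp (PL p - PL c) <= Y p) by (apply Yratio_low; rewrite Hx0; lra).
    assert (H2 : Y c <= Y m * exp (PU c - PU m)) by (apply Yratio_up; rewrite Hx0; lra).
    assert (H2' : Y c * exp (PU m - PU c) <= Y m).
    { replace (Y m) with (Y m * exp (PU c - PU m) * exp (PU m - PU c)).
      2:{ rewrite Rmult_assoc, <- exp_plus. replace (PU c - PU m + (PU m - PU c)) with 0 by ring.
          rewrite exp_0; ring. }
      apply Rmult_le_compat_r. apply Rlt_le, exp_pos. exact H2. }
    eapply Rle_trans; [|apply (prod_lo (Y m) (Y p) (Y c) _ _ Yc (Rlt_le _ _ (exp_pos _)) (Rlt_le _ _ (exp_pos _)) H2' H1)].
    rewrite <- exp_plus, EXL, exp_plus, exp_LN by lra.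
    apply Rmult_le_compat_l; [lra|].
    rewrite EXi.
    eapply Rle_trans; [apply (F3 w a A Hw Ha HA)|].
    eapply Rle_trans; [|apply exp_ge_lin]. lra.
  -
    assert (H1 : Y p <= Y c * exp (PU p - PU c)) by (apply Yratio_up; rewrite Hx0; lra).
    assert (H2 : Y m * exp (PL c - PL m) <= Y c) by (apply Yratio_low; rewrite Hx0; lra).
    assert (H2' : Y m <= Y c * exp (PL m - PL c)).
    { replace (Y m) with (Y m * exp (PL c - PL m) * exp (PL m - PL c)).
      2:{ rewrite Rmult_assoc, <- exp_plus. replace (PL c - PL m + (PL m - PL c)) with 0 by ring.
          rewrite exp_0; ring. }
      apply Rmult_le_compat_r. apply Rlt_le, exp_pos. exact H2. }
    eapply Rle_trans; [apply (prod_up (Y m) (Y p) (Y c) _ _ Yc (conj (Rlt_le _ _ Ym) H2') (conj (Rlt_le _ _ Yp') H1))|].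
    rewrite <- exp_plus, EXU, exp_plus, exp_LN by lra.
    apply Rmult_le_compat_l; [lra|].
    rewrite EPsi.
    pose proof (F1 w a A Hw Ha HA) as HB.
    eapply Rle_trans; [apply exp_le_mono; exact HKU|].
    eapply Rle_trans; [apply exp_le_quad; exact HB|].
    apply (F2 w a A Hw Ha HA).
Qed.
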